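(* Let $n\ge1$, let $H(\mathbf{q},\mathbf{p})=p^2/2-1/q$ on $\mathbb{R}^n\times\mathbb{R}^n$, and let $P_-=\{(\mathbf{q},\mathbf{p}):\mathbf{q}\neq\mathbf{o},\ H(\mathbf{q},\mathbf{p})<0\}$. On $P_-$ define $L_{ij}=q_ip_j-q_jp_i$ for $i,j=1,\dots,n$, the Lenz vector $\mathbf{K}=(p^2-1/q)\mathbf{q}-(\mathbf{q}\cdot\mathbf{p})\mathbf{p}$, and \[ L_{i(n+1)}=-L_{(n+1)i}=\frac{K_i}{\sqrt{-2H}}\quad(i=1,\dots,n),\qquad L_{(n+1)(n+1)}=0. \] Let $\Phi_{LS}:P_-\to T_-=\{(\mathbf{r},\mathbf{s})\in T^{\ast}S^n: \mathbf{r}\neq(0,\dots,0,1),\ \mathbf{s}\neq0\}$ be the Ligon--Schaaf map $\Phi_{LS}(\mathbf{q},\mathbf{p})=(\mathbf{r},\mathbf{s})$, where \[ \mathbf{r}=(\cos v_{n+1})\mathbf{u}+(\sin v_{n+1})\mathbf{v},\qquad \mathbf{s}=\frac{(-\sin v_{n+1})\mathbf{u}+(\cos v_{n+1})\mathbf{v}}{\sqrt{-2H}}, \] with \[ \mathbf{u}=\big(\sqrt{-2H}\,q\,\mathbf{p},\ qp^2-1\big),\qquad \mathbf{v}=\big(-\mathbf{q}/q+(\mathbf{q}\cdot\mathbf{p})\mathbf{p},\ -\sqrt{-2H}\,(\mathbf{q}\cdot\mathbf{p})\big)\in\mathbb{R}^{n+1}, \] and $v_{n+1}=-\sqrt{-2H}\,(\mathbf{q}\cdot\mathbf{p})$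 the last coordinate of $\mathbf{v}$. For $i,j=1,\dots,n+1$ let $M_{ij}=r_is_j-r_js_i$ be the components of angular momentum $\mathbf{r}\wedge\mathbf{s}$ on $\mathbb{R}^{n+1}\times\mathbb{R}^{n+1}$. Then \[ M_{ij}\circ\Phi_{LS}=L_{ij}\qquad\text{for all } i,j=1,\dots,n+1. \] In particular, on $P_-$ one has $\{L_{ij},L_{jk}\}=L_{ki}$, and $\{L_{ij},L_{kl}\}=0$ whenever $\#\{i,j,k,l\}\neq3$, for $i,j,k,l=1,\dots,n+1$; and $\Phi_{LS}$ intertwines the two infinitesimal Hamiltonian actions of $\mathfrak{so}(n+1)$ (generated by the $L_{ij}$ on $P_-$ and by the $M_{ij}$ on $T_-$).
   Context: Vectors are bold; $\mathbf{a}\cdot\mathbf{b}$ is the Euclidean inner product, $a^2=\mathbf{a}\cdot\mathbf{a}$, $q=|\mathbf{q}|$, and $\mathbf{o}$ is the origin. $T^{\ast}S^n$ is identified with $\{(\mathbf{r},\mathbf{s})\in\mathbb{R}^{n+1}\times\mathbb{R}^{n+1}:\mathbf{r}\cdot\mathbf{r}=1,\ \mathbf{r}\cdot\mathbf{s}=0\}$. The phase space $\mathbb{R}^n\times\mathbb{R}^n$ carries the symplectic form $\sum dq_k\wedge dp_k$ and Poisson bracket $\{f,g\}=\sum_k\big(\frac{\partial f}{\partial q_k}\frac{\partial g}{\partial p_k}-\frac{\partial f}{\partial p_k}\frac{\partial g}{\partial q_k}\big)$; similarly $T^{\ast}S^n$ carries the restriction of $\sum_{k=1}^{n+1}dr_k\wedge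 ds_k$. *)

(* Defs.v *)
From Stdlib Require Import Reals Lra Lia List Arith.
From Coquelicot Require Import Coquelicot.
Open Scope R_scope.

(* Vectors of R^N are represented as functions nat -> R; only the
   coordinates 0..N-1 are meaningful.  The paper's index k (1-based)
   corresponds to k-1 here; the paper's index n+1 is index n here. *)
Definition vec := nat -> R.

Fixpoint sumR (N : nat) (f : nat -> R) : R :=
  match N with O => 0 | S m => sumR m f + f m end.

Definition dotR (N : nat) (a b : vec) : R := sumR N (fun k => a k * b k).
Definition vnorm (N : nat) (a : vec) : R := sqrt (dotR N a a).

Definition kepH (n : nat) (q p : vec) : R := dotR n p p / 2 - 1 / vnorm n q.

Definition in_Pminus (n : nat) (q p : vec) : Prop :=
  ~ (forall k, (k < n)%nat -> q k = 0) /\ kepH n q p < 0.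

Definition lenzK (n : nat) (q p : vec) (i : nat) : R :=
  (dotR n p p - 1 / vnorm n q) * q i - dotR n q p * p i.

Definition Lfun (n : nat) (q p : vec) (i j : nat) : R :=
  if Nat.ltb i n then
    (if Nat.ltb j n then q i * p j - q j * p i
     else lenzK n q p i / sqrt (- 2 * kepH n q p))
  else
    (if Nat.ltb j n then - (lenzK n q p j / sqrt (- 2 * kepH n q p))
     else 0).

Definition LS_u (n : nat) (q p : vec) : vec := fun k =>
  if Nat.ltb k n then sqrt (- 2 * kepH n q p) * vnorm n q * p k
  else vnorm n q * dotR n p p - 1.

Definition LS_v (n : nat) (q p : vec) : vec := fun k =>
  if Nat.ltb k n then - (q k / vnorm n q) + dotR n q p * p k
  else - (sqrt (- 2 * kepH n q p) * dotR n q p).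

Definition LS_vlast (n : nat) (q p : vec) : R :=
  - (sqrt (- 2 * kepH n q p) * dotR n q p).

Definition Phi_LS (n : nat) (q p : vec) : vec * vec :=
  let w := LS_vlast n q p in
  let u := LS_u n q p in
  let v := LS_v n q p in
  (fun k => cos w * u k + sin w * v k,
   fun k => (- sin w * u k + cos w * v k) / sqrt (- 2 * kepH n q p)).

Definition Mfun (r s : vec) (i j : nat) : R := r i * s j - r j * s i.

Definition shiftv (x : vec) (k : nat) (t : R) : vec :=
  fun m => if Nat.eqb m k then x m + t else x m.

Definition vaddt (x : vec) (t : R) (d : vec) : vec := fun m => x m + t * d m.

Definition dqF (F : vec -> vec -> R) (k : nat) (x y : vec) : R :=
  Derive (fun t => F (shiftv x k t) y) 0.
Definition dpF (F : vec -> vec -> R) (k : nat) (x y : vec) : R :=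
  Derive (fun t => F x (shiftv y k t)) 0.

Definition poisson (N : nat) (f g : vec -> vec -> R) (x y : vec) : R :=
  sumR N (fun k => dqF f k x y * dpF g k x y - dpF f k x y * dqF g k x y).

Definition hamvf (F : vec -> vec -> R) (x y : vec) : vec * vec :=
  (fun k => dpF F k x y, fun k => - dqF F k x y).

Definition ndistinct4 (i j k l : nat) : nat :=
  length (nodup Nat.eq_dec (i :: j :: k :: l :: nil)).

(* Main.v *)
Require Import Defs.
From Stdlib Require Import Reals List Arith Lra Lia FunctionalExtensionality Classical.
From Coquelicot Require Import Coquelicot.
Open Scope R_scope.

Definition ev (i : nat) : vec := fun m => if Nat.eqb m i then 1 else 0.
Definition comb (x y : vec) (al be ga de : R) (i j : nat) : vec :=
  fun m => al * x m + be * y m + ga * ev i m + de * ev j m.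

Lemma sumR_ext N f g : (forall k, (k < N)%nat -> f k = g k) -> sumR N f = sumR N g.
Proof. induction N; simpl; intros H; auto. rewrite IHN, H; auto. Qed.
Lemma sumR_add N f g : sumR N (fun k => f k + g k) = sumR N f + sumR N g.
Proof. induction N; simpl; [ring|rewrite IHN; ring]. Qed.
Lemma sumR_scal N c f : sumR N (fun k => c * f k) = c * sumR N f.
Proof. induction N; simpl; [ring|rewrite IHN; ring]. Qed.
Lemma sumR_0 N f : (forall k, (k < N)%nat -> f k = 0) -> sumR N f = 0.
Proof. induction N; simpl; intros H; auto. rewrite IHN, H; auto. ring. Qed.
Lemma sumR_ev N i f : (i < N)%nat -> sumR N (fun k => f k * ev i k) = f i.
Proof.
  induction N; intros Hi; [lia|]. simpl.
  destruct (Nat.eq_dec i N).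
  - subst. rewrite sumR_0. unfold ev. rewrite Nat.eqb_refl. ring.
    intros k Hk. unfold ev. rewrite (proj2 (Nat.eqb_neq k N)) by lia. ring.
  - rewrite IHN by lia. unfold ev. rewrite (proj2 (Nat.eqb_neq N i)) by lia. ring.
Qed.

Lemma dotR_comm N x y : dotR N x y = dotR N y x.
Proof. unfold dotR. apply sumR_ext. intros; ring. Qed.
Lemma dotR_ext N x y x' y' : (forall k, (k < N)%nat -> x k = x' k) ->
  (forall k, (k < N)%nat -> y k = y' k) -> dotR N x y = dotR N x' y'.
Proof. intros H1 H2. unfold dotR. apply sumR_ext. intros k Hk. rewrite H1, H2; auto. Qed.
Lemma dotR_vaddt N x y a b t : dotR N (vaddt x t a) (vaddt y t b) =
  dotR N x y + t * (dotR N x b + dotR N a y) + t * t * dotR N a b.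
Proof. unfold dotR, vaddt. induction N; simpl; [ring|]. rewrite IHN. ring. Qed.
Lemma dotR_ev N g k : (k < N)%nat -> dotR N g (ev k) = g k.
Proof. intros; unfold dotR. rewrite sumR_ev; auto. Qed.
Lemma dotR_zero N g : dotR N g (fun _ => 0) = 0.
Proof. unfold dotR. apply sumR_0. intros; ring. Qed.
Lemma dot_comb_r N w x y al be ga de i j : (i < N)%nat -> (j < N)%nat ->
  dotR N w (comb x y al be ga de i j) = al * dotR N w x + be * dotR N w y + ga * w i + de * w j.
Proof.
  intros Hi Hj. unfold dotR, comb.
  rewrite (sumR_ext N _ (fun k => (al * (w k * x k) + be * (w k * y k)) + (ga * (w k * ev i k) + de * (w k * ev j k)))).
  2: intros; ring.
  rewrite sumR_add, !sumR_add, !sumR_scal, !sumR_ev; auto. ring.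
Qed.
Lemma dot_comb_l N w x y al be ga de i j : (i < N)%nat -> (j < N)%nat ->
  dotR N (comb x y al be ga de i j) w = al * dotR N x w + be * dotR N y w + ga * w i + de * w j.
Proof. intros. rewrite dotR_comm, dot_comb_r, (dotR_comm N w x), (dotR_comm N w y); auto. Qed.

Lemma dotR_self_nonneg N x : 0 <= dotR N x x.
Proof. unfold dotR; induction N; simpl; nra. Qed.
Lemma dotR_self_pos N x : ~ (forall k, (k < N)%nat -> x k = 0) -> 0 < dotR N x x.
Proof.
  induction N; intros H. { exfalso; apply H; intros; lia. }
  unfold dotR in *; simpl.
  destruct (classic (forall k, (k < N)%nat -> x k = 0)) as [H0|H0].
  - assert (x N <> 0). { intro E. apply H. intros k Hk. destruct (Nat.eq_dec k N); subst; auto. apply H0; lia. }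
    pose proof (dotR_self_nonneg N x). unfold dotR in H2. 
    assert (0 < x N * x N) by (apply Rsqr_pos_lt; auto). lra.
  - specialize (IHN H0). nra.
Qed.

Lemma vaddt_0 x d : vaddt x 0 d = x.
Proof. extensionality m. unfold vaddt. ring. Qed.

Lemma base_facts n q p : in_Pminus n q p ->
  0 < vnorm n q /\ 0 < sqrt (-2 * kepH n q p) /\
  dotR n q q = vnorm n q * vnorm n q /\
  dotR n p p = 2 / vnorm n q - sqrt (-2 * kepH n q p) * sqrt (-2 * kepH n q p).
Proof.
  intros [H1 H2]. pose proof (dotR_self_pos n q H1) as Hq.
  assert (HQ : 0 < vnorm n q) by (unfold vnorm; apply sqrt_lt_R0; auto).
  assert (HQ2 : vnorm n q * vnorm n q = dotR n q q) by (unfold vnorm; apply sqrt_sqrt; lra).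
  assert (Hk : 0 < -2 * kepH n q p) by lra.
  repeat split; auto.
  - apply sqrt_lt_R0; auto.
  - rewrite sqrt_sqrt by lra. unfold kepH. field. lra.
Qed.


Section Atoms.
Variables (n : nat) (q p a b : vec).
Hypothesis hP : in_Pminus n q p.

Definition fQ t := vnorm n (vaddt q t a).
Definition fB t := dotR n (vaddt q t a) (vaddt p t b).
Definition fC t := dotR n (vaddt p t b) (vaddt p t b).
Definition fc t := sqrt (-2 * kepH n (vaddt q t a) (vaddt p t b)).

Lemma fQ0 : fQ 0 = vnorm n q. Proof. unfold fQ; rewrite vaddt_0; auto. Qed.
Lemma fB0 : fB 0 = dotR n q p. Proof. unfold fB; rewrite !vaddt_0; auto. Qed.
Lemma fC0 : fC 0 = dotR n p p. Proof. unfold fC; rewrite !vaddt_0; auto. Qed.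
Lemma fc0 : fc 0 = sqrt (-2 * kepH n q p). Proof. unfold fc; rewrite !vaddt_0; auto. Qed.

Lemma isd_fQ : is_derive fQ 0 (dotR n q a / vnorm n q).
Proof.
  destruct (base_facts n q p hP) as (HQ & Hc & HQ2 & HC).
  apply is_derive_ext with (f := fun t => sqrt (dotR n q q + t * (dotR n q a + dotR n q a) + t * t * dotR n a a)).
  { intro t. unfold fQ, vnorm. rewrite dotR_vaddt, (dotR_comm n a q). auto. }
  auto_derive.
  - rewrite !Rmult_0_l, !Rplus_0_r. nra.
  - rewrite !Rmult_0_l, !Rplus_0_r. unfold vnorm. field.
    apply Rgt_not_eq, sqrt_lt_R0. nra.
Qed.
Lemma isd_fB : is_derive fB 0 (dotR n q b + dotR n p a).
Proof.
  apply is_derive_ext with (f := fun t => dotR n q p + t * (dotR n q b + dotR n p a) + t * t * dotR n a b).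
  { intro t. unfold fB. rewrite dotR_vaddt, (dotR_comm n a p). auto. }
  auto_derive; auto. ring.
Qed.
Lemma isd_fC : is_derive fC 0 (2 * dotR n p b).
Proof.
  apply is_derive_ext with (f := fun t => dotR n p p + t * (dotR n p b + dotR n p b) + t * t * dotR n b b).
  { intro t. unfold fC. rewrite dotR_vaddt, (dotR_comm n b p). auto. }
  auto_derive; auto. ring.
Qed.
Lemma isd_fc : is_derive fc 0
  (- (dotR n p b + dotR n q a / (vnorm n q * vnorm n q * vnorm n q)) / sqrt (-2 * kepH n q p)).
Proof.
  destruct (base_facts n q p hP) as (HQ & Hc & HQ2 & HC).
  apply is_derive_ext with (f := fun t => sqrt (-2 * (fC t / 2 - 1 / fQ t))).
  { intro t. reflexivity. }
  pose proof isd_fQ as H. pose proof isd_fC as H0.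
  auto_derive.
  - repeat split.
    + exists (2 * dotR n p b); auto.
    + exists (dotR n q a / vnorm n q); auto.
    + rewrite fQ0; lra.
    + rewrite fQ0, fC0. destruct hP as [_ Hk]. unfold kepH in Hk. lra.
  - replace (Derive (fun x : R => fQ x) 0) with (dotR n q a / vnorm n q) by (symmetry; apply is_derive_unique; exact H).
    replace (Derive (fun x : R => fC x) 0) with (2 * dotR n p b) by (symmetry; apply is_derive_unique; exact H0).
    rewrite fQ0, fC0.
    replace (-2 * (dotR n p p * / 2 + - (1 * / vnorm n q))) with (-2 * kepH n q p) by (unfold kepH; field; lra).
    field. split; lra.
Qed.

Lemma D_fQ : Derive (fun t => fQ t) 0 = dotR n q a / vnorm n q.
Proof. apply is_derive_unique, isd_fQ. Qed.
Lemma D_fB : Derive (fun t => fB t) 0 = dotR n q b + dotR n p a.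
Proof. apply is_derive_unique, isd_fB. Qed.
Lemma D_fC : Derive (fun t => fC t) 0 = 2 * dotR n p b.
Proof. apply is_derive_unique, isd_fC. Qed.
Lemma D_fc : Derive (fun t => fc t) 0 = 
  - (dotR n p b + dotR n q a / (vnorm n q * vnorm n q * vnorm n q)) / sqrt (-2 * kepH n q p).
Proof. apply is_derive_unique, isd_fc. Qed.
Lemma ex_fQ : ex_derive (fun t => fQ t) 0. Proof. eexists; apply isd_fQ. Qed.
Lemma ex_fB : ex_derive (fun t => fB t) 0. Proof. eexists; apply isd_fB. Qed.
Lemma ex_fC : ex_derive (fun t => fC t) 0. Proof. eexists; apply isd_fC. Qed.
Lemma ex_fc : ex_derive (fun t => fc t) 0. Proof. eexists; apply isd_fc. Qed.
End Atoms.

Ltac rw_atoms hP :=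
  repeat match goal with
  | |- context [Derive ?f 0] =>
     match f with
     | (fun x => fQ ?n ?q ?a x) => 
        replace (Derive f 0) with (dotR n q a / vnorm n q) by
          (symmetry; apply is_derive_unique; apply (isd_fQ _ _ _ _ hP))
     | (fun x => fB ?n ?q ?p ?a ?b x) => 
        replace (Derive f 0) with (dotR n q b + dotR n p a) by
          (symmetry; apply is_derive_unique; apply (isd_fB _ _ _ _ _))
     | (fun x => fC ?n ?p ?b x) => 
        replace (Derive f 0) with (2 * dotR n p b) by
          (symmetry; apply is_derive_unique; apply (isd_fC _ _ _))
     | (fun x => fc ?n ?q ?p ?a ?b x) => 
        replace (Derive f 0) with (- (dotR n p b + dotR n q a / (vnorm n q * vnorm n q * vnorm n q)) / sqrt (-2 * kepH n q p)) by
          (symmetry; apply is_derive_unique; apply (isd_fc _ _ _ _ _ hP))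
     end
  end.


Ltac ex_atoms hP :=
  repeat match goal with
  | |- _ /\ _ => split
  | |- True => exact I
  | |- ex_derive (fun x => fQ _ _ _ x) 0 => eexists; apply (isd_fQ _ _ _ _ hP)
  | |- ex_derive (fun x => fB _ _ _ _ _ x) 0 => eexists; apply isd_fB
  | |- ex_derive (fun x => fC _ _ _ x) 0 => eexists; apply isd_fC
  | |- ex_derive (fun x => fc _ _ _ _ _ x) 0 => eexists; apply (isd_fc _ _ _ _ _ hP)
  end.

Ltac rw_vals := rewrite ?fQ0, ?fB0, ?fC0, ?fc0.

Ltac base hP q p :=
  let HQ := fresh "HQ" in let Hc := fresh "Hc" in let HQ2 := fresh "HQ2" in let HC := fresh "HC" in
  destruct (base_facts _ _ _ hP) as (HQ & Hc & HQ2 & HC);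
  try rewrite HQ2; try rewrite HC;
  set (Q := vnorm _ q) in *; set (c := sqrt (-2 * kepH _ q p)) in *.

Section Grad.
Variables (n : nat) (q p : vec).

Let Q := vnorm n q.
Let c := sqrt (-2 * kepH n q p).
Let B := dotR n q p.
Let C := dotR n p p.
Let K i := (C - 1/Q) * q i - B * p i.

Definition gqK (s : R) i : vec :=
  comb q p (s * (q i / (Q*Q*Q*c) + K i / (c*c*c*Q*Q*Q))) (s * (- p i / c)) (s * ((C - 1/Q)/c)) 0 i i.
Definition gpK (s : R) i : vec :=
  comb q p (s * (- p i / c)) (s * (2 * q i / c + K i / (c*c*c))) (s * (- B / c)) 0 i i.

Definition GQ i j : vec :=
  if Nat.ltb i n then (if Nat.ltb j n then comb q p 0 0 (p j) (- p i) i j else gqK 1 i)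
  else (if Nat.ltb j n then gqK (-1) j else comb q p 0 0 0 0 0 0).
Definition GP i j : vec :=
  if Nat.ltb i n then (if Nat.ltb j n then comb q p 0 0 (- q j) (q i) i j else gpK 1 i)
  else (if Nat.ltb j n then gpK (-1) j else comb q p 0 0 0 0 0 0).
End Grad.

Lemma DL n q p a b i j : (1 <= n)%nat -> in_Pminus n q p -> (i <= n)%nat -> (j <= n)%nat ->
  Derive (fun t => Lfun n (vaddt q t a) (vaddt p t b) i j) 0 =
  dotR n (GQ n q p i j) a + dotR n (GP n q p i j) b.
Proof.
  intros hn hP Hi Hj. unfold GQ, GP, gqK, gpK.
  destruct (Nat.ltb_spec i n) as [Hi'|Hi']; destruct (Nat.ltb_spec j n) as [Hj'|Hj'].
  - rewrite !dot_comb_l by auto.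
    apply is_derive_unique.
    apply is_derive_ext with (f := fun t => (q i + t * a i) * (p j + t * b j) - (q j + t * a j) * (p i + t * b i)).
    { intro t. unfold Lfun. rewrite (proj2 (Nat.ltb_lt _ _) Hi'), (proj2 (Nat.ltb_lt _ _) Hj'). reflexivity. }
    auto_derive; auto. ring.
  - assert (j = n) by lia. subst j.
    rewrite !dot_comb_l by auto.
    apply is_derive_unique.
    apply is_derive_ext with (f := fun t => ((fC n p b t - 1 / fQ n q a t) * (q i + t * a i) - fB n q p a b t * (p i + t * b i)) / fc n q p a b t).
    { intro t. unfold Lfun. rewrite (proj2 (Nat.ltb_lt _ _) Hi'), Nat.ltb_irrefl. reflexivity. }
    auto_derive; ex_atoms hP; rw_vals.
    + base hP q p. lra.
    + base hP q p. lra.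
    + rw_atoms hP. rw_vals. base hP q p. field. lra.
  - assert (i = n) by lia. subst i.
    rewrite !dot_comb_l by auto.
    apply is_derive_unique.
    apply is_derive_ext with (f := fun t => - (((fC n p b t - 1 / fQ n q a t) * (q j + t * a j) - fB n q p a b t * (p j + t * b j)) / fc n q p a b t)).
    { intro t. unfold Lfun. rewrite (proj2 (Nat.ltb_lt _ _) Hj'), Nat.ltb_irrefl. reflexivity. }
    auto_derive; ex_atoms hP; rw_vals.
    + base hP q p. lra.
    + base hP q p. lra.
    + rw_atoms hP. rw_vals. base hP q p. field. lra.
  - assert (i = n) by lia. assert (j = n) by lia. subst i j.
    rewrite !dot_comb_l by lia.
    apply is_derive_unique.
    apply is_derive_ext with (f := fun t => 0).
    { intro t. unfold Lfun. rewrite Nat.ltb_irrefl. reflexivity. }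
    auto_derive; auto. ring.
Qed.


Lemma shiftv_eq x m t : shiftv x m t = vaddt x t (ev m).
Proof. extensionality k. unfold shiftv, vaddt, ev. destruct (Nat.eqb k m); ring. Qed.
Lemma vaddt_zero x t : vaddt x t (fun _ => 0) = x.
Proof. extensionality k. unfold vaddt. ring. Qed.

Lemma dq_L n q p i j m : (1 <= n)%nat -> in_Pminus n q p -> (i <= n)%nat -> (j <= n)%nat -> (m < n)%nat ->
  dqF (fun x y => Lfun n x y i j) m q p = GQ n q p i j m.
Proof.
  intros. unfold dqF.
  rewrite (Derive_ext _ (fun t => Lfun n (vaddt q t (ev m)) (vaddt p t (fun _ => 0)) i j)).
  2:{ intro t. rewrite shiftv_eq, vaddt_zero. reflexivity. }
  rewrite DL by auto. rewrite dotR_ev, dotR_zero by auto. ring.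
Qed.
Lemma dp_L n q p i j m : (1 <= n)%nat -> in_Pminus n q p -> (i <= n)%nat -> (j <= n)%nat -> (m < n)%nat ->
  dpF (fun x y => Lfun n x y i j) m q p = GP n q p i j m.
Proof.
  intros. unfold dpF.
  rewrite (Derive_ext _ (fun t => Lfun n (vaddt q t (fun _ => 0)) (vaddt p t (ev m)) i j)).
  2:{ intro t. rewrite shiftv_eq, vaddt_zero. reflexivity. }
  rewrite DL by auto. rewrite dotR_ev, dotR_zero by auto. ring.
Qed.

Lemma poisson_L n q p i j k l : (1 <= n)%nat -> in_Pminus n q p -> (i <= n)%nat -> (j <= n)%nat ->
  (k <= n)%nat -> (l <= n)%nat ->
  poisson n (fun x y => Lfun n x y i j) (fun x y => Lfun n x y k l) q p =
  dotR n (GQ n q p i j) (GP n q p k l) - dotR n (GP n q p i j) (GQ n q p k l).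
Proof.
  intros. unfold poisson.
  rewrite (sumR_ext _ _ (fun m => GQ n q p i j m * GP n q p k l m + (-1) * (GP n q p i j m * GQ n q p k l m))).
  2:{ intros m Hm. rewrite dq_L, dp_L, dq_L, dp_L by auto. ring. }
  rewrite sumR_add, sumR_scal. unfold dotR. ring.
Qed.

Ltac simpl_idx :=
  repeat match goal with
  | H : (?x < ?y)%nat |- context [Nat.ltb ?x ?y] => rewrite (proj2 (Nat.ltb_lt x y) H)
  | |- context [Nat.ltb ?x ?x] => rewrite Nat.ltb_irrefl
  | |- context [Nat.eqb ?x ?x] => rewrite Nat.eqb_refl
  | H : ?x <> ?y |- context [Nat.eqb ?x ?y] => rewrite (proj2 (Nat.eqb_neq x y) H)
  | H : ?y <> ?x |- context [Nat.eqb ?x ?y] => rewrite (proj2 (Nat.eqb_neq x y) (not_eq_sym H))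
  | H : (?x < ?y)%nat |- context [Nat.eqb ?x ?y] => rewrite (proj2 (Nat.eqb_neq x y) (Nat.lt_neq _ _ H))
  | H : (?x < ?y)%nat |- context [Nat.eqb ?y ?x] => rewrite (proj2 (Nat.eqb_neq y x) (not_eq_sym (Nat.lt_neq _ _ H)))
  end.

Ltac expand_dots :=
  unfold GQ, GP, gqK, gpK; simpl_idx;
  repeat (rewrite ?dot_comb_l, ?dot_comb_r by lia);
  unfold comb, ev; simpl_idx.

Ltac idx_case i n :=
  let H := fresh in destruct (Nat.ltb_spec i n) as [H|H]; [|assert (i = n) by lia; subst i].

Lemma part2 n (hn : (1 <= n)%nat) : forall i j k : nat, (i <= n)%nat -> (j <= n)%nat -> (k <= n)%nat ->
     i <> j -> j <> k -> k <> i ->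
     forall (q p : vec), in_Pminus n q p ->
       poisson n (fun x y => Lfun n x y i j) (fun x y => Lfun n x y j k) q p
       = Lfun n q p k i.
Proof.
  intros i j k Hi Hj Hk Hij Hjk Hki q p hP.
  rewrite poisson_L by auto.
  idx_case i n; idx_case j n; idx_case k n; try lia;
  expand_dots; unfold Lfun, lenzK; simpl_idx;
  rewrite ?(dotR_comm n p q); base hP q p; field; lra.
Qed.

Ltac all_idx n :=
  repeat match goal with
  | H : (?x <= n)%nat |- _ => is_var x;
      let H' := fresh in destruct (Nat.lt_ge_cases x n) as [H'|H'];
      [clear H | assert (x = n) by lia; subst x; clear H H']
  end.

Lemma part3 n (hn : (1 <= n)%nat) : forall i j k l : nat, (i <= n)%nat -> (j <= n)%nat -> (k <= n)%nat ->
     (l <= n)%nat -> ndistinct4 i j k l <> 3%nat ->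
     forall (q p : vec), in_Pminus n q p ->
       poisson n (fun x y => Lfun n x y i j) (fun x y => Lfun n x y k l) q p = 0.
Proof.
  intros i j k l Hi Hj Hk Hl H q p hP.
  rewrite poisson_L by auto.
  unfold ndistinct4 in H. simpl in H.
  repeat (match type of H with context [Nat.eq_dec ?x ?y] => destruct (Nat.eq_dec x y) end; simpl in H);
  try (exfalso; apply H; reflexivity); subst; clear H;
  all_idx n; try (exfalso; congruence);
  expand_dots; rewrite ?(dotR_comm n p q); base hP q p; field; lra.
Qed.


Lemma part1 n (hn : (1 <= n)%nat) : forall (q p : vec), in_Pminus n q p ->
     forall i j : nat, (i <= n)%nat -> (j <= n)%nat ->
       Mfun (fst (Phi_LS n q p)) (snd (Phi_LS n q p)) i j = Lfun n q p i j.
Proof.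
  intros q p hP i j Hi Hj.
  unfold Mfun, Phi_LS; simpl.
  set (w := LS_vlast n q p).
  pose proof (sin2_cos2 w) as Hsc. unfold Rsqr in Hsc.
  destruct (base_facts _ _ _ hP) as (HQ & Hc & _ & _).
  transitivity ((sin w * sin w + cos w * cos w) *
     (LS_u n q p i * LS_v n q p j - LS_u n q p j * LS_v n q p i) / sqrt (-2 * kepH n q p)).
  { field. lra. }
  rewrite Hsc. clear w Hsc.
  unfold LS_u, LS_v, Lfun, lenzK.
  all_idx n; try (exfalso; congruence); simpl_idx;
  rewrite ?(dotR_comm n p q); base hP q p; field; lra.
Qed.

Section Dphi.
Variables (n : nat) (q p a b : vec).
Hypothesis hP : in_Pminus n q p.
Let Q0 := vnorm n q.
Let c0 := sqrt (-2 * kepH n q p).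
Let B0 := dotR n q p.
Let C0 := dotR n p p.
Let w0 := - (c0 * B0).
Let dQ0 := dotR n q a / Q0.
Let dB0 := dotR n q b + dotR n p a.
Let dC0 := 2 * dotR n p b.
Let dc0 := - (dotR n p b + dotR n q a / (Q0 * Q0 * Q0)) / c0.
Let dw0 := - (dc0 * B0 + c0 * dB0).
Definition du m := if Nat.ltb m n then (dc0 * Q0 + c0 * dQ0) * p m + c0 * Q0 * b m else dQ0 * C0 + Q0 * dC0.
Definition dv m := if Nat.ltb m n then - (a m / Q0) + q m * dQ0 / (Q0 * Q0) + dB0 * p m + B0 * b m else dw0.
Definition dcc := dc0.
Definition dww := dw0.

Lemma Dr m : (m <= n)%nat ->
  Derive (fun t => fst (Phi_LS n (vaddt q t a) (vaddt p t b)) m) 0 =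
  cos w0 * (du m + dw0 * LS_v n q p m) + sin w0 * (dv m - dw0 * LS_u n q p m).
Proof.
  intros Hm. unfold du, dv, LS_u, LS_v. apply is_derive_unique.
  destruct (Nat.ltb_spec m n) as [Hm'|Hm'].
  - apply is_derive_ext with (f := fun t => cos (- (fc n q p a b t * fB n q p a b t)) * (fc n q p a b t * fQ n q a t * (p m + t * b m))
        + sin (- (fc n q p a b t * fB n q p a b t)) * (- ((q m + t * a m) / fQ n q a t) + fB n q p a b t * (p m + t * b m))).
    { intro t. unfold Phi_LS, LS_u, LS_v, LS_vlast. simpl. rewrite (proj2 (Nat.ltb_lt _ _) Hm'). reflexivity. }
    auto_derive; ex_atoms hP; rw_vals.
    + base hP q p. lra.
    + rw_atoms hP. rw_vals. unfold w0, dw0, dc0, dB0, dQ0, B0, c0, Q0. base hP q p. field. lra.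
  - assert (m = n) by lia. subst m.
    apply is_derive_ext with (f := fun t => cos (- (fc n q p a b t * fB n q p a b t)) * (fQ n q a t * fC n p b t - 1)
        + sin (- (fc n q p a b t * fB n q p a b t)) * (- (fc n q p a b t * fB n q p a b t))).
    { intro t. unfold Phi_LS, LS_u, LS_v, LS_vlast. simpl. rewrite Nat.ltb_irrefl. reflexivity. }
    auto_derive; ex_atoms hP; rw_vals.
    rw_atoms hP. rw_vals. unfold w0, dw0, dc0, dB0, dQ0, dC0, B0, C0, c0, Q0. base hP q p. field. lra.
Qed.

Lemma Ds m : (m <= n)%nat ->
  Derive (fun t => snd (Phi_LS n (vaddt q t a) (vaddt p t b)) m) 0 =
  (- sin w0 * (du m + dw0 * LS_v n q p m) + cos w0 * (dv m - dw0 * LS_u n q p m)) / c0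
  - dc0 * (- sin w0 * LS_u n q p m + cos w0 * LS_v n q p m) / (c0 * c0).
Proof.
  intros Hm. unfold du, dv, LS_u, LS_v. apply is_derive_unique.
  destruct (Nat.ltb_spec m n) as [Hm'|Hm'].
  - apply is_derive_ext with (f := fun t => (- sin (- (fc n q p a b t * fB n q p a b t)) * (fc n q p a b t * fQ n q a t * (p m + t * b m))
        + cos (- (fc n q p a b t * fB n q p a b t)) * (- ((q m + t * a m) / fQ n q a t) + fB n q p a b t * (p m + t * b m))) / fc n q p a b t).
    { intro t. unfold Phi_LS, LS_u, LS_v, LS_vlast. simpl. rewrite (proj2 (Nat.ltb_lt _ _) Hm'). reflexivity. }
    auto_derive; ex_atoms hP; rw_vals.
    + base hP q p. lra.
    + base hP q p. lra.
    + rw_atoms hP. rw_vals. unfold w0, dw0, dc0, dB0, dQ0, B0, c0, Q0. base hP q p. field. lra.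
  - assert (m = n) by lia. subst m.
    apply is_derive_ext with (f := fun t => (- sin (- (fc n q p a b t * fB n q p a b t)) * (fQ n q a t * fC n p b t - 1)
        + cos (- (fc n q p a b t * fB n q p a b t)) * (- (fc n q p a b t * fB n q p a b t))) / fc n q p a b t).
    { intro t. unfold Phi_LS, LS_u, LS_v, LS_vlast. simpl. rewrite Nat.ltb_irrefl. reflexivity. }
    auto_derive; ex_atoms hP; rw_vals.
    + base hP q p. lra.
    + rw_atoms hP. rw_vals. unfold w0, dw0, dc0, dB0, dQ0, dC0, B0, C0, c0, Q0. base hP q p. field. lra.
Qed.
End Dphi.


Lemma dot_fstXL n q p i j x : (1 <= n)%nat -> in_Pminus n q p -> (i <= n)%nat -> (j <= n)%nat ->
  dotR n x (fun k => dpF (fun x y => Lfun n x y i j) k q p) = dotR n x (GP n q p i j).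
Proof. intros. apply dotR_ext; auto. intros. apply dp_L; auto. Qed.
Lemma dot_sndXL n q p i j x : (1 <= n)%nat -> in_Pminus n q p -> (i <= n)%nat -> (j <= n)%nat ->
  dotR n x (fun k => - dqF (fun x y => Lfun n x y i j) k q p) = - dotR n x (GQ n q p i j).
Proof.
  intros. transitivity (dotR n x (fun k => -1 * GQ n q p i j k)).
  - apply dotR_ext; auto. intros. rewrite dq_L; auto. ring.
  - unfold dotR. rewrite (sumR_ext _ _ (fun k => -1 * (x k * GQ n q p i j k))) by (intros; ring).
    rewrite sumR_scal. ring.
Qed.

Lemma dpM r0 s0 i j m : dpF (fun r s => Mfun r s i j) m r0 s0 =
  r0 i * (if Nat.eqb j m then 1 else 0) - r0 j * (if Nat.eqb i m then 1 else 0).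
Proof.
  unfold dpF, Mfun.
  transitivity (Derive (fun t : R => r0 i * (s0 j + t * (if Nat.eqb j m then 1 else 0)) - r0 j * (s0 i + t * (if Nat.eqb i m then 1 else 0))) 0).
  { apply Derive_ext. intro t. unfold shiftv. destruct (Nat.eqb j m), (Nat.eqb i m); ring. }
  apply is_derive_unique. auto_derive; auto. ring.
Qed.
Lemma dqM r0 s0 i j m : dqF (fun r s => Mfun r s i j) m r0 s0 =
  (if Nat.eqb i m then 1 else 0) * s0 j - (if Nat.eqb j m then 1 else 0) * s0 i.
Proof.
  unfold dqF, Mfun.
  transitivity (Derive (fun t : R => (r0 i + t * (if Nat.eqb i m then 1 else 0)) * s0 j - (r0 j + t * (if Nat.eqb j m then 1 else 0)) * s0 i) 0).
  { apply Derive_ext. intro t. unfold shiftv. destruct (Nat.eqb j m), (Nat.eqb i m); ring. }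
  apply is_derive_unique. auto_derive; auto. ring.
Qed.

Lemma part4 n (hn : (1 <= n)%nat) : forall i j : nat, (i <= n)%nat -> (j <= n)%nat ->
     forall (q p : vec), in_Pminus n q p ->
       let XL := hamvf (fun x y => Lfun n x y i j) q p in
       let XM := hamvf (fun r s => Mfun r s i j)
                   (fst (Phi_LS n q p)) (snd (Phi_LS n q p)) in
       forall m : nat, (m <= n)%nat ->
         Derive (fun t => fst (Phi_LS n (vaddt q t (fst XL)) (vaddt p t (snd XL))) m) 0
           = fst XM m
         /\
         Derive (fun t => snd (Phi_LS n (vaddt q t (fst XL)) (vaddt p t (snd XL))) m) 0
           = snd XM m.
Proof.
  intros i j Hi Hj q p hP XL XM m Hm. subst XL XM. unfold hamvf. cbn [fst snd].
  rewrite (Dr n q p _ _ hP m Hm), (Ds n q p _ _ hP m Hm), dpM, dqM.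
  unfold du, dv.
  rewrite !dot_fstXL, !dot_sndXL by auto.
  unfold Phi_LS, LS_vlast. cbn [fst snd].
  destruct (Nat.eq_dec i j); destruct (Nat.eq_dec i m); destruct (Nat.eq_dec j m); subst;
  try (exfalso; congruence); all_idx n; try (exfalso; congruence);
  simpl_idx; rewrite ?dp_L, ?dq_L by (auto; lia);
  expand_dots; unfold LS_u, LS_v; simpl_idx;
  rewrite ?(dotR_comm n p q); base hP q p; split; field; lra.
Qed.


Theorem theorem4p1 (n : nat) (hn : (1 <= n)%nat) :
  (* M_{ij} o Phi_LS = L_{ij} on P_- *)
  (forall (q p : vec), in_Pminus n q p ->
     forall i j : nat, (i <= n)%nat -> (j <= n)%nat ->
       Mfun (fst (Phi_LS n q p)) (snd (Phi_LS n q p)) i j = Lfun n q p i j)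
  /\
  (* {L_ij, L_jk} = L_ki for distinct i,j,k *)
  (forall i j k : nat, (i <= n)%nat -> (j <= n)%nat -> (k <= n)%nat ->
     i <> j -> j <> k -> k <> i ->
     forall (q p : vec), in_Pminus n q p ->
       poisson n (fun x y => Lfun n x y i j) (fun x y => Lfun n x y j k) q p
       = Lfun n q p k i)
  /\
  (* {L_ij, L_kl} = 0 whenever #{i,j,k,l} <> 3 *)
  (forall i j k l : nat, (i <= n)%nat -> (j <= n)%nat -> (k <= n)%nat ->
     (l <= n)%nat -> ndistinct4 i j k l <> 3%nat ->
     forall (q p : vec), in_Pminus n q p ->
       poisson n (fun x y => Lfun n x y i j) (fun x y => Lfun n x y k l) q p = 0)
  /\
  (* intertwining: d Phi_LS (X_{L_ij}) = X_{M_ij} o Phi_LS *)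
  (forall i j : nat, (i <= n)%nat -> (j <= n)%nat ->
     forall (q p : vec), in_Pminus n q p ->
       let XL := hamvf (fun x y => Lfun n x y i j) q p in
       let XM := hamvf (fun r s => Mfun r s i j)
                   (fst (Phi_LS n q p)) (snd (Phi_LS n q p)) in
       forall m : nat, (m <= n)%nat ->
         Derive (fun t => fst (Phi_LS n (vaddt q t (fst XL)) (vaddt p t (snd XL))) m) 0
           = fst XM m
         /\
         Derive (fun t => snd (Phi_LS n (vaddt q t (fst XL)) (vaddt p t (snd XL))) m) 0
           = snd XM m).
Proof.
  split; [apply part1; auto|].
  split; [apply part2; auto|].
  split; [apply part3; auto|].
  apply part4; auto.
Qed.
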